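(* Let $\mathcal{G}=(\mathcal{V},\mathcal{E})$ be an undirected graph without self-loops, with symmetric adjacency matrix $A$ having nonnegative entries, where $A_{ij}>0$ if and only if $\{i,j\}\in\mathcal{E}$ (unweighted graphs being the case of $0/1$ entries). Let $\mathcal{V}_1\subseteq\mathcal{V}$ be a nonempty set of nodes, and let $\mathcal{V}_2\subseteq\mathcal{V}\setminus\mathcal{V}_1$ be a nonempty set of nodes such that every node of $\mathcal{V}_2$ is adjacent to at least one node of $\mathcal{V}_1$. Let $A_1$ be the $|\mathcal{V}_1|\times|\mathcal{V}_2|$ submatrix of $A$ with rows indexed by $\mathcal{V}_1$ and columns indexed by $\mathcal{V}_2$, and $A_2$ the $|\mathcal{V}_2|\times|\mathcal{V}_2|$ submatrix of $A$ indexed by $\mathcal{V}_2$. For each $v\in\mathcal{V}_2$ let $s_v>0$ be the sum of row $v$ of the $|\mathcal{V}_2|\times(|\mathcal{V}_1|+|\mathcal{V}_2|)$ matrix $(A_1^T\,|\,A_2)$, and let $\tilde{A}_1$ (of size $|\mathcal{V}_2|\times|\mathcal{V}_1|$) and $\tilde{A}_2$ (of size $|\mathcal{V}_2|\times|\mathcal{V}_2|$) be obtained from $A_1^T$ and $A_2$ respectively by dividing row $v$ by $s_v$ for each $v\in\mathcal{V}_2$. Let $f\ge 1$, let $Z_1$ be any real $|\mathcal{V}_1|\times f$ matrix, and let $Z^*=(I-\tilde{A}_2)^{-1}\tilde{A}_1 Z_1$ (the matrix $I-\tilde{A}_2$ is invertible). For an arbitrary real $|\mathcal{V}_2|\times f$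 matrix $Z^{(0)}$, define $Z^{(t)}=\tilde{A}_1 Z_1+\tilde{A}_2 Z^{(t-1)}$ for $t\ge 1$. Then $\|Z^{(t)}-Z^*\|_F\to 0$ as $t\to+\infty$ exponentially fast, i.e. there exist constants $C\ge 0$ and $\rho\in[0,1)$ such that $\|Z^{(t)}-Z^*\|_F\le C\rho^t$ for all $t\ge 0$, where $\|\cdot\|_F$ denotes the Frobenius norm.
   Context: This is the propagation step used to infer latent vectors (rows of $Z^{(t)}$) for nodes of $\mathcal{V}_2$ from already-computed latent vectors (rows of $Z_1$) for nodes of $\mathcal{V}_1$, by iterating $Z_2 = \tilde{A}_1 Z_1 + \tilde{A}_2 Z_2$; $Z^*$ is the exact solution of this linear system. *)

(* Defs.v *)
From HB Require Import structures.
From mathcomp Require Import all_boot all_order all_algebra.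
From mathcomp Require Import reals.
Set Implicit Arguments. Unset Strict Implicit. Unset Printing Implicit Defensive.
Import Order.TTheory GRing.Theory Num.Theory.
Local Open Scope ring_scope.

Section Defs.
Variable R : realType.
Variable n : nat.
Variables (A : 'M[R]_n) (V1 V2 : {set 'I_n}).

Definition subA1 : 'M[R]_(#|V1|, #|V2|) :=
  \matrix_(i < #|V1|, j < #|V2|) A (enum_val i) (enum_val j).
Definition subA2 : 'M[R]_(#|V2|, #|V2|) :=
  \matrix_(i < #|V2|, j < #|V2|) A (enum_val i) (enum_val j).

Definition rowsum_s (k : 'I_#|V2|) : R :=
  \sum_(j < #|V1|) (subA1^T) k j + \sum_(j < #|V2|) subA2 k j.

Definition tA1 : 'M[R]_(#|V2|, #|V1|) :=
  \matrix_(k, j) ((subA1^T) k j / rowsum_s k).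
Definition tA2 : 'M[R]_(#|V2|, #|V2|) :=
  \matrix_(k, j) (subA2 k j / rowsum_s k).

Definition Zstar (f : nat) (Z1 : 'M[R]_(#|V1|, f)) : 'M[R]_(#|V2|, f) :=
  invmx (1%:M - tA2) *m (tA1 *m Z1).

Definition Zit (f : nat) (Z1 : 'M[R]_(#|V1|, f)) (Z0 : 'M[R]_(#|V2|, f))
  (t : nat) : 'M[R]_(#|V2|, f) :=
  iter t (fun Z => tA1 *m Z1 + tA2 *m Z) Z0.
End Defs.

Definition frob (R : realType) (p q : nat) (M : 'M[R]_(p, q)) : R :=
  Num.sqrt (\sum_(i < p) \sum_(j < q) M i j ^+ 2).

(* Main.v *)
Require Import Defs.
From HB Require Import structures.
From mathcomp Require Import all_boot all_order all_algebra.
From mathcomp Require Import reals.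
From mathcomp Require Import lra.
Import Order.TTheory GRing.Theory Num.Theory.
Local Open Scope ring_scope.

Lemma maxex_seq (R : realDomainType) (T : eqType) (g : T -> R) (s : seq T) :
  exists M, [/\ 0 <= M, (forall x, x \in s -> g x <= M) &
     (M = 0 \/ exists x, M = g x)].
Proof.
elim: s => [|a s [M [M0 HM HE]]].
  by exists 0; split => //; left.
have [h|h] := leP M (g a).
  exists (g a); split.
  - exact: le_trans M0 h.
  - move=> x; rewrite in_cons => /orP [/eqP->//|xs].
    exact: le_trans (HM _ xs) h.
  - by right; exists a.
exists M; split => //.
  move=> x; rewrite in_cons => /orP [/eqP->|xs]; first exact: ltW.
  exact: HM.
Qed.

Lemma maxex (R : realDomainType) (T : finType) (g : T -> R) :
  exists M, [/\ 0 <= M, (forall x, g x <= M) &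
     (M = 0 \/ exists x, M = g x)].
Proof.
have [M [M0 HM HE]] := @maxex_seq _ _ g (enum T).
by exists M; split => // x; apply: HM; rewrite mem_enum.
Qed.

Section S.
Variable R : realType.
Variable n : nat.
Variables (A : 'M[R]_n) (V1 V2 : {set 'I_n}).
Hypothesis Hnn : forall i j, 0 <= A i j.
Hypothesis Hadj : forall v, v \in V2 -> exists2 u, u \in V1 & 0 < A u v.

Local Notation T := (@tA2 R n A V1 V2).
Local Notation p := #|V2|.
Definition rs (k : 'I_p) : R := \sum_j T k j.

Lemma s_facts (k : 'I_p) :
  0 < rowsum_s A V1 k /\ rs k < 1.
Proof.
set a := \sum_(j < #|V1|) (subA1 A V1 V2)^T k j.
set b := \sum_(j < p) subA2 A V2 k j.
have b0 : 0 <= b by apply: sumr_ge0 => j _; rewrite mxE.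
have a0 : 0 < a.
  have [u Hu Hau] := Hadj _ (enum_valP k).
  rewrite /a (bigD1 (enum_rank_in Hu u)) //= !mxE (enum_rankK_in Hu Hu).
  have : 0 <= \sum_(i < #|V1| | i != enum_rank_in Hu u) (subA1 A V1 V2)^T k i.
    by apply: sumr_ge0 => j _; rewrite !mxE.
  lra.
have s0 : 0 < rowsum_s A V1 k by rewrite /rowsum_s -/a -/b; lra.
split => //.
have -> : rs k = b / rowsum_s A V1 k.
  by rewrite /rs /b mulr_suml; apply: eq_bigr => j _; rewrite mxE.
rewrite ltr_pdivrMr // mul1r /rowsum_s -/a -/b; lra.
Qed.

Lemma T_ge0 k j : 0 <= T k j.
Proof.
rewrite mxE; apply: divr_ge0; first by rewrite mxE.
by apply: ltW; case: (s_facts k).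
Qed.

Lemma bound_sum (k : 'I_p) (y : 'I_p -> R) (c : R) :
  (forall j, `|y j| <= c) -> `|\sum_j T k j * y j| <= rs k * c.
Proof.
move=> Hy; apply: le_trans (ler_norm_sum _ _ _) _.
rewrite /rs mulr_suml; apply: ler_sum => j _.
by rewrite normrM (ger0_norm (T_ge0 k j)); apply: ler_wpM2l => //; apply: T_ge0.
Qed.

Lemma unit_T : (1%:M - T) \in unitmx.
Proof.
rewrite -unitmx_tr -row_free_unit; apply: inj_row_free => x Hx.
rewrite linearB /= trmx1 mulmxBr mulmx1 in Hx.
move/eqP: Hx; rewrite subr_eq0 => /eqP Hx.
have Hk : forall k, x 0 k = \sum_j T k j * x 0 j.
  move=> k; rewrite {1}Hx mxE; apply: eq_bigr => j _; by rewrite mxE mulrC.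
have [M [M0 HM HE]] := @maxex _ _ (fun k => `|x 0 k|).
have Mle : M <= 0.
  case: HE => [->//|[k0 Mk]].
  have := bound_sum k0 _ _ HM; rewrite -Hk -Mk.
  have [_ h] := s_facts k0.
  move: M0; nra.
apply/matrixP => i k; rewrite ord1 mxE.
by apply/eqP; rewrite -normr_le0; apply: le_trans (HM k) Mle.
Qed.

End S.

Theorem theorem1 (R : realType) (n : nat) (A : 'M[R]_n)
  (V1 V2 : {set 'I_n}) (f : nat)
  (Z1 : 'M[R]_(#|V1|, f)) (Z0 : 'M[R]_(#|V2|, f)) :
  A^T = A ->
  (forall i j, 0 <= A i j) ->
  (forall i, A i i = 0) ->
  V1 != set0 ->
  V2 != set0 ->
  [disjoint V1 & V2] ->
  (forall v, v \in V2 -> exists2 u, u \in V1 & 0 < A u v) ->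
  (0 < f)%N ->
  (1%:M - @tA2 R n A V1 V2) \in unitmx /\
  exists C rho : R, [/\ 0 <= C, 0 <= rho, rho < 1 &
    forall t : nat,
      frob (@Zit R n A V1 V2 f Z1 Z0 t - @Zstar R n A V1 V2 f Z1) <= C * rho ^+ t].
Proof.
move=> _ Hnn _ _ _ _ Hadj _.
have Hu := @unit_T R n A V1 V2 Hnn Hadj.
have sf := @s_facts R n A V1 V2 Hnn Hadj.
have bs := @bound_sum R n A V1 V2 Hnn Hadj.
split => //.
set T := tA2 A V1 V2.
set B := tA1 A V1 V2 *m Z1.
set Zs := Zstar A V2 Z1.
have HZ : Zs = B + T *m Zs.
  have h : (1%:M - T) *m Zs = B by rewrite /Zs /Zstar mulKVmx.
  rewrite mulmxBl mul1mx in h.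
  by move/eqP: h; rewrite subr_eq => /eqP.
set E := fun t => Zit A Z1 Z0 t - Zs.
have HE : forall t, E t.+1 = T *m E t.
  move=> t; rewrite /E /Zit iterS -/(Zit A Z1 Z0 t) -/B -/T.
  by rewrite mulmxBr {1}HZ opprD addrACA subrr add0r.
have [rho [rho0 Hrho Hre]] := @maxex _ _ (@rs R n A V1 V2).
have rho1 : rho < 1.
  case: Hre => [->|[k ->]]; first exact: ltr01.
  by case: (sf k).
have [M [M0 HM _]] := @maxex _ _ (fun ij : 'I_#|V2| * 'I_f => `|E 0%N ij.1 ij.2|).
have Hb : forall t i j, `|E t i j| <= M * rho ^+ t.
  elim=> [|t IH] i j; first by rewrite expr0 mulr1; exact: (HM (i, j)).
  rewrite HE mxE.
  apply: le_trans (bs i _ _ (fun k => IH k j)) _.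
  rewrite exprS [M * (rho * _)]mulrCA; apply: ler_wpM2r; last exact: Hrho.
  by apply: mulr_ge0 => //; apply: exprn_ge0.
exists (Num.sqrt ((#|V2| * f)%:R) * M), rho; split => //.
  by apply: mulr_ge0 => //; apply: sqrtr_ge0.
move=> t; rewrite /frob -/(E t).
set c := M * rho ^+ t.
have c0 : 0 <= c by apply: mulr_ge0 => //; apply: exprn_ge0.
apply: (@le_trans _ _ (Num.sqrt (\sum_(i < #|V2|) \sum_(j < f) c ^+ 2))).
  apply: ler_wsqrtr; apply: ler_sum => i _; apply: ler_sum => j _.
  rewrite -real_normK ?num_real // !expr2; apply: ler_pM => //; exact: Hb.
rewrite sumr_const card_ord sumr_const card_ord -mulrnA mulnC -[c ^+ 2 *+ _]mulr_natl.
by rewrite sqrtrM ?ler0n // sqrtr_sqr (ger0_norm c0) mulrA.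
Qed.
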